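(* Let $(X_n)_{n\ge1}$ be a sequence of symmetrical random variables with finite second moments, taking values in a Hilbert space $\mathbb{H}$. Suppose the series $\sum_{n=1}^\infty X_n$ converges almost surely in $\mathbb{H}$, and there is a constant $K>0$ such that for all integers $m\ge0$ and $j\ge1$, $$\mathbb{E}\big(\|X_{m+1}+\cdots+X_{m+j}\|^4\big)\le K\,\Big(\mathbb{E}\big(\|X_{m+1}+\cdots+X_{m+j}\|^2\big)\Big)^2.$$ Then the series $\sum_{n=1}^\infty X_n$ also converges in $L^2(\Omega;\mathbb{H})$, i.e. $\lim_{m\to\infty}\sup_{j\ge1}\mathbb{E}(\|S_{m+j}-S_m\|^2)=0$ where $S_n=X_1+\cdots+X_n$.
   Context: A random variable $X$ with values in $\mathbb{H}$ is symmetrical if $X$ and $-X$ have the same distribution. No independence among the $X_n$ is assumed. *)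

(* Defs.v *)
From HB Require Import structures.
From mathcomp Require Import all_boot all_order all_algebra.
From mathcomp Require Import all_classical all_reals all_analysis.
Set Implicit Arguments. Unset Strict Implicit. Unset Printing Implicit Defensive.
Import Order.TTheory GRing.Theory Num.Theory.
Import numFieldNormedType.Exports.
Local Open Scope classical_set_scope.
Local Open Scope ring_scope.

(* A (real) inner product [ip] on V inducing the norm of V:
   symmetric, linear in the first argument, and |x|^2 = <x,x>.
   (Positivity/definiteness then follow from the norm axioms.)
   A Hilbert space is a complete normed space with such an inner product. *)
Definition is_inner_product_norm {R : realType} {V : normedModType R}
  (ip : V -> V -> R) : Prop :=
  [/\ (forall x y, ip x y = ip y x),
      (forall (a : R) (x y z : V), ip (a *: x + y) z = a * ip x z + ip y z)
    & (forall x, `|x| ^+ 2 = ip x x)].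

Definition Borel_set {V : topologicalType} (B : set V) : Prop :=
  <<s [set O : set V | open O] >> B.

(* An H-valued random variable (in the sense needed for L^p(Omega;H)):
   Borel measurable and separably valued (strongly measurable, by Pettis). *)
Definition H_random_variable {d} {T : measurableType d} {R : realType}
  {V : normedModType R} (X : T -> V) : Prop :=
  (forall B : set V, Borel_set B -> measurable (X @^-1` B)) /\
  (exists D : set V, countable D /\ range X `<=` closure D).

Definition symmetrical {d} {T : measurableType d} {R : realType}
  {V : normedModType R} (P : probability T R) (X : T -> V) : Prop :=
  forall B : set V, Borel_set B ->
    P (X @^-1` B) = P ((fun w => - X w) @^-1` B).

Definition finite_second_moment {d} {T : measurableType d} {R : realType}
  {V : normedModType R} (P : probability T R) (X : T -> V) : Prop :=
  (\int[P]_w ((`|X w| ^+ 2)%:E) < +oo)%E.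

(* Partial sums: S n = X_1 + ... + X_n, with X_k represented by X (k-1). *)
Definition psum {T} {R : realType} {V : normedModType R}
  (X : nat -> T -> V) (n : nat) (w : T) : V := \sum_(i < n) X i w.

(* Main.v *)
Require Import Defs.
From HB Require Import structures.
From mathcomp Require Import all_boot all_order all_algebra.
From mathcomp Require Import all_classical all_reals all_analysis.
From mathcomp Require Import ring lra.
From mathcomp Require Import measurable_realfun measurable_fun_approximation.
Import Order.TTheory GRing.Theory Num.Theory.
Import numFieldNormedType.Exports.
Local Open Scope classical_set_scope.
Local Open Scope ring_scope.

Lemma mX_norm (d : measure_display) (T : measurableType d) (R : realType)
  (H : normedModType R) (X : T -> H) (y : H) :
  H_random_variable X -> measurable_fun setT (fun w => `|X w - y|).
Proof.
move=> [HB _]; apply: (measurability _ (measurable_realfun.RGenInftyO.measurableE R)).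
move=> _ [_ [x ->] <-]; rewrite setTI.
have -> : (fun w => `|X w - y|) @^-1` `]-oo, x[ = X @^-1` [set v | `|v - y| < x].
  by apply/seteqP; split => w /=; rewrite in_itv /=.
apply: HB; apply: sub_sigma_algebra => /=.
apply: (@open_comp _ _ (fun v => `|v - y|) [set r : R | r < x]); last exact: open_lt.
move=> v _; apply: (continuous_comp (f := fun v => v - y)); last exact: norm_continuous.
by apply: cvgB; [exact: cvg_id | exact: cvg_cst].
Qed.
Lemma idA (V : zmodType) (f g y e : V) : f - (y - e) = (f + g - y) - (g - e).
Proof. by rewrite !opprB -[f + g - y]addrA [g - y]addrC addrA -[X in _ = X]addrA [g + _]addrC subrK addrAC addrA. Qed.
Lemma idB (V : zmodType) (f g y e : V) : f + g - y = (f - (y - e)) + (g - e).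
Proof. by rewrite (@idA _ f g y e) subrK. Qed.

Lemma mAdd (d : measure_display) (T : measurableType d) (R : realType)
  (H : normedModType R) (F G : T -> H) (e : nat -> H) :
  (forall y, measurable_fun setT (fun w => `|F w - y|)) ->
  (forall y, measurable_fun setT (fun w => `|G w - y|)) ->
  (forall w, closure (range e) (G w)) ->
  forall y, measurable_fun setT (fun w => `|F w + G w - y|).
Proof.
move=> mF mG cG y; apply: (measurability _ (measurable_realfun.RGenInftyO.measurableE R)).
move=> _ [_ [x ->] <-]; rewrite setTI.
have -> : (fun w => `|F w + G w - y|) @^-1` `]-oo, x[ =
   \bigcup_p [set w | `|F w - (y - e p)| + `|G w - e p| < x].
  apply/seteqP; split => w /=; rewrite in_itv /=.
  - move=> hx.
    pose r := (x - `|F w + G w - y|) / 2.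
    have r0 : 0 < r by rewrite /r divr_gt0 // subr_gt0.
    have [_ [[p _ <-] /= hp]] := cG w _ (nbhsx_ballx (G w) r r0).
    rewrite -ball_normE /= in hp.
    exists p => //=.
    rewrite (@idA _ (F w) (G w)).
    have h1 := ler_normB (F w + G w - y) (G w - e p).
    have h2 : `|G w - e p| < r by exact: hp.
    rewrite /r in h2.
    lra.
  - move=> [p _ /= hp].
    rewrite (@idB _ (F w) (G w) y (e p)).
    exact: (le_lt_trans (ler_normD _ _) hp).
apply: bigcupT_measurable => p.
have := (measurable_realfun.measurable_funD (mF (y - e p)) (mG (e p))) measurableT _ (measurable_itv `]-oo, x[).
rewrite setTI; congr measurable; apply/seteqP; split => w /=; by rewrite in_itv.
Qed.
Lemma count_enum (H : zmodType) (D : set H) : countable D -> exists e : nat -> H, D `<=` range e.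
Proof.
move=> /countable_injP [f finj].
pose e p := match pselect (exists x, D x /\ f x = p) with
  | left h => projT1 (cid h) | right _ => 0 end.
exists e => x Dx; exists (f x) => //.
rewrite /e; case: pselect => [h|[]]; last by exists x.
case: (cid h) => x' [Dx' fx'] /=.
by apply: finj; rewrite ?inE.
Qed.

Lemma mSum (d : measure_display) (T : measurableType d) (R : realType)
  (H : normedModType R) (X : nat -> T -> H) (m : nat) :
  (forall n, H_random_variable (X n)) ->
  forall k y, measurable_fun setT (fun w => `|\sum_(i < k) X (m + i)%N w - y|).
Proof.
move=> HX; elim => [|k IH] y.
  have -> : (fun w => `|\sum_(i < 0) X (m + i)%N w - y|) = fun=> `|0 - y| by apply: funext => w; rewrite big_ord0.
  exact: measurable_cst.
have -> : (fun w => `|\sum_(i < k.+1) X (m + i)%N w - y|) = (fun w => `|\sum_(i < k) X (m + i)%N w + X (m+k)%N w - y|) by apply: funext => w; rewrite big_ord_recr.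
have [_ [D [cD sD]]] := HX (m + k)%N.
have [e De] := count_enum _ _ cD.
have := @mAdd _ _ _ _ _ _ e IH (fun y => @mX_norm _ _ _ _ _ y (HX (m + k)%N)).
apply => //.
move=> w; apply: (@closure_subset _ D (range e) De); apply: sD; by exists w.
Qed.
Lemma sq_sum_le (R : realFieldType) k (u : 'I_k -> R) :
  (\sum_i u i) ^+ 2 <= k%:R * \sum_i u i ^+ 2.
Proof.
have E : (\sum_i u i) ^+ 2 = \sum_i \sum_j u i * u j.
  by rewrite expr2 mulr_suml; apply: eq_bigr => i _; rewrite mulr_sumr.
have E2 : \sum_i \sum_j (u i ^+ 2 + u j ^+ 2) = 2 * (k%:R * \sum_i u i ^+ 2).
  under eq_bigr do rewrite big_split /= sumr_const card_ord -mulr_natr.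
  rewrite big_split /= sumr_const card_ord -mulr_suml -mulr_natr.
  have hk : forall x : R, x *+ k = x * k%:R by move=> x; rewrite mulr_natr.
  rewrite hk !mul1r; lra.
have L : 2 * \sum_i \sum_j u i * u j <= \sum_i \sum_j (u i ^+ 2 + u j ^+ 2).
  rewrite mulr_sumr; apply: ler_sum => i _; rewrite mulr_sumr; apply: ler_sum => j _.
  have := sqr_ge0 (u i - u j); rewrite sqrrB mulr2n -mulr_natl; lra.
rewrite E; lra.
Qed.

Lemma mY (d : measure_display) (T : measurableType d) (R : realType)
  (H : normedModType R) (X : nat -> T -> H) (m j : nat) :
  (forall n, H_random_variable (X n)) ->
  measurable_fun setT (fun w => `|\sum_(i < j) X (m + i)%N w|).
Proof.
move=> HX; have := @mSum _ _ _ _ X m HX j 0.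
by rewrite (_ : (fun w => _) = (fun w => `|\sum_(i < j) X (m + i)%N w|)) //; apply: funext => w; rewrite subr0.
Qed.

Lemma mXn (d : measure_display) (T : measurableType d) (R : realType)
  (H : normedModType R) (X : T -> H) :
  H_random_variable X -> measurable_fun setT (fun w => `|X w|).
Proof.
move=> HX; have := @mX_norm _ _ _ _ X 0 HX.
by rewrite (_ : (fun w => _) = (fun w => `|X w|)) //; apply: funext => w; rewrite subr0.
Qed.

Lemma fin2 (d : measure_display) (T : measurableType d) (R : realType)
  (P : probability T R) (H : normedModType R) (X : nat -> T -> H) (m j : nat) :
  (forall n, H_random_variable (X n)) ->
  (forall n, finite_second_moment P (X n)) ->
  (\int[P]_w ((`|\sum_(i < j) X (m + i)%N w| ^+ 2)%:E) < +oo)%E.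
Proof.
move=> HX F2.
apply: (@le_lt_trans _ _ (\int[P]_w (\sum_(i < j) ((j%:R * `|X (m + i)%N w| ^+ 2)%:E)))%E).
  apply: ge0_le_integral => //.
  - by apply/measurable_EFinP; apply: measurable_funX; exact: (@mY _ _ _ _ X m j HX).
  - apply: emeasurable_sum => i; apply/measurable_EFinP.
    apply: measurable_realfun.measurable_funM; first exact: measurable_cst.
    by apply: measurable_funX; exact: (@mXn _ _ _ _ _ (HX _)).
  - move=> w _; rewrite sumEFin lee_fin -mulr_sumr.
    apply: le_trans (sq_sum_le _ _ (fun i : 'I_j => `|X (m + i)%N w|)).
    apply: lerXn2r; rewrite ?inE ?nnegrE ?normr_ge0 ?sumr_ge0 //.
    exact: ler_norm_sum.
rewrite ge0_integral_sum //; last first.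
  - move=> i; apply/measurable_EFinP.
    apply: measurable_realfun.measurable_funM; first exact: measurable_cst.
    by apply: measurable_funX; exact: (@mXn _ _ _ _ _ (HX _)).
apply: lte_sum_pinfty => i _.
under eq_integral do rewrite EFinM.
rewrite ge0_integralZl_EFin //.
- apply: lte_mul_pinfty => //; exact: F2.
- by apply/measurable_EFinP; apply: measurable_funX; exact: (@mXn _ _ _ _ _ (HX _)).
Qed.

Lemma PZ (d : measure_display) (T : measurableType d) (R : realType)
  (P : probability T R) (K a : R) (Z : T -> R) :
  (0 < K) -> (0 < a) -> measurable_fun setT Z ->
  (\int[P]_w ((Z w ^+ 2)%:E) = a%:E)%E ->
  (\int[P]_w ((Z w ^+ 4)%:E) <= K%:E * (a%:E * a%:E))%E ->
  (((16 * K)^-1)%:E <= P [set w | (a / 2 < Z w ^+ 2)%R])%E.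
Proof.
move=> K0 a0 mZ Ia Ib.
set A := [set w | (a / 2 < Z w ^+ 2)].
have mA : measurable A.
  have := (measurable_funX 2 mZ) measurableT _ (measurable_itv `]a / 2, +oo[).
  by rewrite setTI; congr measurable; apply/seteqP; split => w /=; rewrite in_itv /= andbT.
set M := (4 * K * a).
have M0 : (0 < M) by rewrite /M !mulr_gt0.
have pw : forall w, (Z w ^+ 2 <= a / 2 + (M * \1_A w + M^-1 * Z w ^+ 4)).
  move=> w; rewrite /indic; case: (boolP (w \in A)) => [|/negP wA] /=.
  - rewrite inE /A /= => wA.
    have [ZM|ZM] := leP (Z w ^+ 2) M.
      have : (0 <= M^-1 * Z w ^+ 4) by rewrite mulr_ge0 ?exprn_even_ge0 // invr_ge0 ltW.
      lra.
    have : (Z w ^+ 2 <= M^-1 * Z w ^+ 4).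
      rewrite ler_pdivlMl // (_ : Z w ^+ 4 = Z w ^+ 2 * Z w ^+ 2); last by rewrite -exprD.
      by rewrite ler_pM2r ?(lt_trans M0 ZM) // ltW.
    lra.
  - have : ~ (a / 2 < Z w ^+ 2) by move=> h; apply: wA; rewrite inE.
    move=> /negP; rewrite -leNgt => h.
    have : (0 <= M^-1 * Z w ^+ 4) by rewrite mulr_ge0 ?exprn_even_ge0 // invr_ge0 ltW.
    lra.
have mZ4 : measurable_fun setT (fun w => Z w ^+ 4) := measurable_funX 4 mZ.
have mI : measurable_fun setT (\1_A : T -> R) := measurable_indic mA.
have Z4 : forall w, 0 <= Z w ^+ 4 by move=> w; rewrite exprn_even_ge0.
have Mi0 : 0 <= M^-1 by rewrite invr_ge0 ltW.
have EI : (\int[P]_w ((a/2)%:E + ((M * \1_A w)%:E + (M^-1 * Z w ^+ 4)%:E)) =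
   (a/2)%:E + (M%:E * P A + M^-1%:E * \int[P]_w (Z w ^+ 4)%:E))%E.
  rewrite ge0_integralD //; [|by move=> w _; rewrite lee_fin divr_ge0 // ltW
    |by move=> w _; rewrite adde_ge0 // lee_fin mulr_ge0 // ltW
    |by apply/measurable_EFinP; apply: measurable_funD;
        [exact: measurable_funM (measurable_cst _) mI|exact: measurable_funM (measurable_cst _) mZ4]].
  rewrite ge0_integralD //; [|by move=> w _; rewrite lee_fin mulr_ge0 // ltW
    |by apply/measurable_EFinP; exact: measurable_funM (measurable_cst _) mI
    |by move=> w _; rewrite lee_fin mulr_ge0
    |by apply/measurable_EFinP; exact: measurable_funM (measurable_cst _) mZ4].
  congr (_ + _)%E.
  rewrite integral_cst //; rewrite -[X in _ = X]mule1; congr (_ * _)%E; exact: probability_setT.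
  congr (_ + _)%E.
  - under eq_integral do rewrite EFinM.
    rewrite ge0_integralZl_EFin ?integral_indic ?setIT //.
    all: try (exact: ltW); try (exact/measurable_EFinP).
  - under eq_integral do rewrite EFinM.
    rewrite ge0_integralZl_EFin //.
    all: try (exact/measurable_EFinP).
    all: try (by move=> w _; rewrite lee_fin).
have H1 : (a%:E <= (a/2)%:E + (M%:E * P A + M^-1%:E * \int[P]_w (Z w ^+ 4)%:E))%E.
  rewrite -Ia -EI; apply: ge0_le_integral => //.
  - by move=> w _; rewrite lee_fin sqr_ge0.
  - by apply/measurable_EFinP; exact: measurable_funX.
  - rewrite (_ : (fun w => _) = EFin \o (fun w => a/2 + (M * \1_A w + M^-1 * Z w ^+ 4))); last first.
      by apply: funext => w; rewrite /= !EFinD.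
    apply/measurable_EFinP; apply: measurable_funD; first exact: measurable_cst.
    apply: measurable_funD; [exact: measurable_funM (measurable_cst _) mI|exact: measurable_funM (measurable_cst _) mZ4].
  - by move=> w _; rewrite -!EFinD lee_fin; exact: pw.
have PA0 : (0 <= P A)%E by [].
have PA1 : (P A <= 1)%E by exact: probability_le1.
have PAf : P A \is a fin_num by rewrite ge0_fin_numE // (le_lt_trans PA1) // ltey.
have B0 : (0 <= \int[P]_w (Z w ^+ 4)%:E)%E by apply: integral_ge0 => w _; rewrite lee_fin.
have Bf : (\int[P]_w (Z w ^+ 4)%:E)%E \is a fin_num.
  by rewrite ge0_fin_numE // (le_lt_trans Ib) // -!EFinM ltey.
rewrite -(fineK PAf) in H1 *; rewrite -(fineK Bf) in H1 Ib.
set p := fine (P A) in H1 *; set b := fine (\int[P]_w (Z w ^+ 4)%:E)%E in H1 Ib.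
rewrite -!EFinM -!EFinD !lee_fin in H1 Ib *.
have hb : M^-1 * b <= a / 4.
  apply: (le_trans (ler_wpM2l Mi0 Ib)); rewrite /M le_eqVlt; apply/orP; left; apply/eqP.
  field; apply/andP; split; apply/lt0r_neq0 => //.
have h : a * 1 <= a * (16 * K * p).
  rewrite /M in H1 hb; set c := (4 * K * a)^-1 * b in H1 hb; lra.
rewrite ler_pM2l // in h.
rewrite -(ler_pM2l (_ : 0 < 16 * K)) ?mulfV ?mulr_gt0 //; last by apply/lt0r_neq0; rewrite mulr_gt0.
Qed.

Lemma idC (V : zmodType) (l a b : V) : a - b = (l - b) - (l - a).
Proof. by rewrite opprB [RHS]addrC addrA subrK. Qed.

Lemma cprob (d : measure_display) (T : measurableType d) (R : realType)
  (P : probability T R) (H : normedModType R) (X : nat -> T -> H) (c : R) :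
  (forall m j, measurable [set w | c < `|psum X (m + j) w - psum X m w| ^+ 2]) ->
  {ae P, forall w, cvg ((fun n => psum X n w) @ \oo)} ->
  0 < c -> forall kap : R, 0 < kap -> exists m0, forall m, (m0 <= m)%N -> forall j,
    (P [set w | (c < `|psum X (m + j) w - psum X m w| ^+ 2)%R] < kap%:E)%E.
Proof.
move=> mS [N [mN PN sN]] c0 kap kap0.
pose B m := \bigcup_(k in [set k | (m <= k)%N]) \bigcup_j [set w | c < `|psum X (k + j) w - psum X k w| ^+ 2].
have mB : forall m, measurable (B m).
  by move=> m; apply: bigcup_measurable => k _; apply: bigcupT_measurable => j; exact: mS.
have mcap : measurable (\bigcap_m B m) by exact: bigcapT_measurable.
have Bdec : nonincreasing_seq B.
  move=> m n mn; apply/subsetPset => w [k /= mk hk]; exists k => //; exact: leq_trans mn mk.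
have capN : \bigcap_m B m `<=` N.
  move=> w wB; apply: sN => /= wc.
  pose r := Num.min 1 c.
  have r0 : 0 < r by rewrite lt_min ltr01 c0.
  move/cvgrPdist_lt: wc => /(_ (r / 2)) [|M _ hM]; first by rewrite divr_gt0.
  have [k /= Mk [j _ /= hj]] := wB M I.
  have h1 := hM _ Mk; have h2 := hM (k + j)%N (leq_trans Mk (leq_addr _ _)).
  rewrite /= in h1 h2.
  set l := lim _ in h1 h2.
  have hd : `|psum X (k + j) w - psum X k w| < r.
    rewrite (@idC _ l).
    apply: (le_lt_trans (ler_normB _ _)); lra.
  have : `|psum X (k + j) w - psum X k w| ^+ 2 < c.
    have y0 := normr_ge0 (psum X (k + j) w - psum X k w).
    have r1 : r <= 1 by rewrite ge_min lexx.
    have rc : r <= c by rewrite ge_min lexx orbT.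
    nra.
  lra.
have PB0 : (P (B 0%N) < +oo)%E by rewrite (le_lt_trans (probability_le1 _ (mB 0%N))) // ltey.
have lim0 := nonincreasing_cvg_mu PB0 mB mcap Bdec.
move: lim0; set z := (_ (\bigcap_m B m)) => lim0.
have cap0 : z = 0%E.
  apply/eqP; rewrite eq_le measure_ge0 andbT -PN.
  by apply: le_measure => //; rewrite inE.
rewrite cap0 in lim0.
move/fine_cvgP: lim0 => [_ /cvgrPdist_lt /(_ kap kap0) [m0 _ hm0]].
exists m0 => m mm j.
have hBm := hm0 m mm; rewrite /= sub0r normrN in hBm.
have fB : P (B m) \is a fin_num by rewrite ge0_fin_numE // (le_lt_trans (probability_le1 _ (mB m))) // ltey.
apply: (@le_lt_trans _ _ (P (B m))).
  apply: le_measure; [rewrite inE; exact: mS|rewrite inE; exact: mB|].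
  move=> w hw; exists m => //=; by exists j.
rewrite -(fineK fB) lte_fin; apply: le_lt_trans hBm; exact: ler_norm.
Qed.

Lemma psum_diff (T : Type) (R : realType) (H : normedModType R) (X : nat -> T -> H) m j w :
  psum X (m + j) w - psum X m w = \sum_(i < j) X (m + i)%N w.
Proof. by rewrite /psum big_split_ord /= addrAC subrr add0r. Qed.

Theorem theorem3 (d : measure_display) (T : measurableType d) (R : realType)
  (P : probability T R) (H : completeNormedModType R) (ip : H -> H -> R)
  (X : nat -> T -> H) :
  is_inner_product_norm ip ->
  (forall n, H_random_variable (X n)) ->
  (forall n, symmetrical P (X n)) ->
  (forall n, finite_second_moment P (X n)) ->
  {ae P, forall w, cvg ((fun n => psum X n w) @ \oo)} ->
  (exists K : R, 0 < K /\
     forall m j : nat, (1 <= j)%N ->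
       (\int[P]_w ((`|psum X (m + j) w - psum X m w| ^+ 4)%:E)
        <= K%:E * ((\int[P]_w ((`|psum X (m + j) w - psum X m w| ^+ 2)%:E))
                   * (\int[P]_w ((`|psum X (m + j) w - psum X m w| ^+ 2)%:E))))%E) ->
  (fun m : nat => ereal_sup
      [set (\int[P]_w ((`|psum X (m + j) w - psum X m w| ^+ 2)%:E))%E
       | j in [set j : nat | (1 <= j)%N]]) @ \oo --> 0%E.
Proof.
move=> _ HX _ F2 ae [K [K0 HK]].
have mYm : forall m j, measurable_fun setT (fun w => `|psum X (m + j) w - psum X m w|).
  move=> m j; rewrite (_ : (fun w => _) = (fun w => `|\sum_(i < j) X (m + i)%N w|)).
    exact: (@mY _ _ _ _ X m j HX).
  by apply: funext => w; rewrite psum_diff.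
have mS : forall c m j, measurable [set w | c < `|psum X (m + j) w - psum X m w| ^+ 2].
  move=> c m j.
  have := (measurable_funX 2 (mYm m j)) measurableT _ (measurable_itv `]c, +oo[%R).
  by rewrite setTI; congr measurable; apply/seteqP; split => w /=; rewrite in_itv /= andbT.
have finY : forall m j, (\int[P]_w ((`|psum X (m + j) w - psum X m w| ^+ 2)%:E) < +oo)%E.
  move=> m j; under eq_integral do rewrite psum_diff.
  exact: fin2.
pose a m := ereal_sup [set (\int[P]_w ((`|psum X (m + j) w - psum X m w| ^+ 2)%:E))%E
       | j in [set j : nat | (1 <= j)%N]].
have a0 : forall m, (0 <= a m)%E.
  move=> m; apply: le_ereal_sup_tmp; exists (\int[P]_w ((`|psum X (m + 1) w - psum X m w| ^+ 2)%:E))%E.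
    by exists 1%N.
  by apply: integral_ge0 => w _; rewrite lee_fin exprn_ge0.
have key : forall e : R, 0 < e -> exists m0, forall m, (m0 <= m)%N -> (a m <= e%:E)%E.
  move=> e e0.
  have kap0 : 0 < (16 * K)^-1 by rewrite invr_gt0 mulr_gt0.
  have [m0 hm0] := @cprob _ _ _ P _ X _ (mS (e / 2)) ae (divr_gt0 e0 (ltr0n _ 2)) _ kap0.
  exists m0 => m mm; apply: ge_ereal_sup => _ [j j1 <-].
  rewrite leNgt; apply/negP => hI.
  have If : (\int[P]_w ((`|psum X (m + j) w - psum X m w| ^+ 2)%:E))%E \is a fin_num.
    by rewrite ge0_fin_numE ?finY // integral_ge0 // => w _; rewrite lee_fin exprn_ge0.
  move: hI (HK m j j1); rewrite -(fineK If).
  set A := fine _ => hI hB.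
  rewrite lte_fin in hI.
  have := @PZ _ _ _ P K _ _ K0 (lt_trans e0 hI) (mYm m j) (esym (fineK If)) hB.
  move=> hP.
  have := hm0 m mm j.
  rewrite ltNge => /negP; apply.
  apply: (le_trans hP); apply: le_measure; rewrite ?inE; [exact: mS|exact: mS|].
  move=> w /= h; apply: lt_trans h; rewrite ltr_pM2r //; lra.
have fa : forall m e, 0 < e -> (a m <= e%:E)%E -> a m \is a fin_num.
  by move=> m e e0 h; rewrite ge0_fin_numE // (le_lt_trans h) // ltey.
rewrite -/a; apply/fine_cvgP; split.
  have [m0 hm0] := key 1 ltr01.
  exists m0 => // m /= mm; exact: (fa m 1 ltr01 (hm0 m mm)).
apply/cvgrPdist_le => eps eps0.
have [m0 hm0] := key eps eps0.
exists m0 => // m /= mm; rewrite sub0r normrN.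
have hf := fa m eps eps0 (hm0 m mm).
rewrite ger0_norm ?fine_ge0 // -lee_fin fineK //; exact: hm0.
Qed.
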